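(* Let $G$ be a finite group such that the identity element is the only vertex of the power graph $\mathscr{G}(G)$ adjacent to all other vertices. Then $\mathscr{G}(G)$ is not overfull.
   Context: For a finite group $G$, the power graph $\mathscr{G}(G)$ is the simple graph with vertex set the elements of $G$, in which two distinct elements $a,b$ are adjacent if and only if one is a power of the other. For a finite simple graph $\Gamma$ on $n$ vertices with maximum vertex degree $\Delta(\Gamma)$, $\Gamma$ is called overfull if $|E(\Gamma)| / \lfloor n/2 \rfloor > \Delta(\Gamma)$. *)

(* Defs.v *)
From mathcomp Require Import all_boot all_fingroup.
Set Implicit Arguments. Unset Strict Implicit. Unset Printing Implicit Defensive.
Local Open Scope group_scope.

Definition pg_adj (gT : finGroupType) (a b : gT) : bool :=
  (a != b) && ((a \in <[b]>) || (b \in <[a]>)).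

Definition pg_nbhd (gT : finGroupType) (G : {group gT}) (a : gT) : {set gT} :=
  [set b in G | pg_adj a b].

Definition pg_deg (gT : finGroupType) (G : {group gT}) (a : gT) : nat :=
  #|pg_nbhd G a|.

Definition pg_maxdeg (gT : finGroupType) (G : {group gT}) : nat :=
  \max_(a in G) pg_deg G a.

Definition pg_edges (gT : finGroupType) (G : {group gT}) : {set {set gT}} :=
  [set e : {set gT} | [exists a in G, exists b in G, pg_adj a b && (e == [set a; b])]].

(* Overfull: |E| / floor(n/2) > Delta, written without division
   (equivalent when floor(n/2) > 0; for n = 1 it yields "not overfull"). *)
Definition pg_overfull (gT : finGroupType) (G : {group gT}) : bool :=
  pg_maxdeg G * (#|G| ./2) < #|pg_edges G|.

Definition pg_dominating (gT : finGroupType) (G : {group gT}) (a : gT) : bool :=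
  [forall b in G, (b != a) ==> pg_adj a b].

(* Main.v *)
Require Import Defs.
From mathcomp Require Import all_boot all_fingroup.
From mathcomp Require Import zify.
Set Implicit Arguments. Unset Strict Implicit. Unset Printing Implicit Defensive.
Local Open Scope group_scope.

Lemma pg_adjC (gT : finGroupType) (a b : gT) : pg_adj a b = pg_adj b a.
Proof. by rewrite /pg_adj eq_sym orbC. Qed.

Section S.
Variables (gT : finGroupType) (G : {group gT}).

Definition PP := [set p in setX G G | pg_adj p.1 p.2].

Lemma edges_le : 2 * #|pg_edges G| <= #|PP|.
Proof.
have -> : #|PP| = \sum_(p in PP) 1 by rewrite sum1_card.
rewrite (partition_big (fun p : gT * gT => [set p.1; p.2]) (mem (pg_edges G))) /=;
  last first.
  move=> [a b]; rewrite !inE /= => /andP [/andP [aG bG] ab].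
  apply/existsP; exists a; rewrite aG; apply/existsP; exists b; by rewrite bG ab /=.
rewrite mulnC -sum_nat_const; apply: leq_sum => e.
rewrite inE => /existsP [a /andP [aG /existsP [b /andP [bG /andP [ab /eqP ->]]]]].
rewrite sum1_card.
have sub : [set (a, b); (b, a)] \subset [pred p | (p \in PP) && ([set p.1; p.2] == [set a; b])].
  apply/subsetP => p; rewrite !inE => /orP [] /eqP -> /=.
    by rewrite aG bG ab eqxx.
  by rewrite bG aG pg_adjC ab setUC eqxx.
apply: leq_trans (subset_leq_card sub).
rewrite cards2; case/andP: ab => ab _.
by case: eqP => // [[]] /eqP; rewrite (negPf ab).
Qed.

Lemma PP_sum : #|PP| <= \sum_(a in G) pg_deg G a.
Proof.
have -> : #|PP| = \sum_(p in PP) 1 by rewrite sum1_card.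
rewrite (partition_big (fun p : gT * gT => p.1) (mem G)) /=; last first.
  by move=> [a b]; rewrite !inE /= => /andP [/andP [aG _] _].
apply: leq_sum => a aG; rewrite sum1_card.
have sub : [pred p | (p \in PP) && (p.1 == a)] \subset (pair a) @: pg_nbhd G a.
  apply/subsetP => [[x y]]; rewrite !inE /= => /andP [/andP [/andP [xG yG] xy] /eqP xa].
  subst x; apply/imsetP; exists y => //; by rewrite !inE yG xy.
apply: leq_trans (subset_leq_card sub) _.
exact: leq_imset_card.
Qed.

End S.

Theorem mainTheorem5 (gT : finGroupType) (G : {group gT}) :
  (forall a, a \in G -> pg_dominating G a -> a = 1%g) ->
  ~~ pg_overfull G.
Proof.
move=> H.
rewrite /pg_overfull -leqNgt.
set n := #|G|.
have n1 : 0 < n by apply/card_gt0P; exists 1; exact: group1.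
have hdeg1 : pg_deg G 1 = n.-1.
  rewrite /pg_deg; have -> : pg_nbhd G 1 = G :\ 1.
    apply/setP => b; rewrite !inE /pg_adj group1 /=.
    by rewrite andbT andbC eq_sym.
  by rewrite /n (cardsD1 1 G) group1.
have hmax : n.-1 <= pg_maxdeg G.
  rewrite -hdeg1 /pg_maxdeg; exact: (leq_bigmax_cond _ (group1 G)).
have hdeg : forall a, a \in G -> a != 1 -> pg_deg G a <= n.-2.
  move=> a aG a1.
  have : ~~ pg_dominating G a by apply/negP => /(H a aG) /eqP; rewrite (negPf a1).
  move/forallPn => [b]; rewrite negb_imply => /andP [bG].
  rewrite negb_imply => /andP [ba nab].
  have sub : pg_nbhd G a \subset (G :\ a) :\ b.
    apply/subsetP => c; rewrite !inE => /andP [cG ac].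
    rewrite cG andbT; apply/andP; split.
      by apply: contraNneq nab => <-.
    by case/andP: ac => ac _; rewrite eq_sym.
  apply: leq_trans (subset_leq_card sub) _.
  have := cardsD1 b (G :\ a); rewrite !inE bG ba /=.
  have := cardsD1 a G; rewrite aG /n. by move=> -> ->.
have hsum : \sum_(a in G) pg_deg G a <= n.-1 + n.-1 * n.-2.
  rewrite (bigD1 1) ?group1 //=; rewrite hdeg1 leq_add2l.
  apply: (@leq_trans (\sum_(i in G | i != 1) n.-2)).
    by apply: leq_sum => a /andP [aG a1]; exact: hdeg.
  rewrite sum_nat_const.
  have := cardsD1 1 G; rewrite group1 -/n => hc.
  rewrite leq_mul2r; apply/orP; right.
  apply: leq_trans (subset_leq_card (_ : _ \subset G :\ 1)) _.
    by apply/subsetP => x; rewrite !inE andbC.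
  by rewrite /= in hc; rewrite hc add1n.
have := edges_le G; have := PP_sum G.
have := odd_double_half n.
move: hmax hsum.
set E := #|pg_edges G|; set M := pg_maxdeg G; set S := \sum_(a in G) pg_deg G a.
set h := n./2; set P := #|PP G|.
move=> hmax hsum hn hP hE.
have : E * 2 <= n.-1 * n.-1 by lia.
have : n.-1 <= h.*2 by lia.
move=> h1 h2.
have : n.-1 * n.-1 <= h.*2 * M by apply: leq_mul.
lia.
Qed.
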